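(* Consider the errorless symmetric relay network described in the context, with a fixed time horizon $T\ge 1$. A policy $\pi^*$ is optimal, i.e. it minimizes $\frac{1}{TK}\sum_{t=1}^T\sum_{k=1}^K h_k^{\pi}(t)$ over all policies $\pi$, if and only if $\pi^*$ satisfies both \[ \sum_{t=1}^{T}\sum_{\tau=1}^{t-2} R(\mathcal{S}^{\pi^*}(\tau)) = \max_{\pi}\sum_{t=1}^{T}\sum_{\tau=1}^{t-2} R(\mathcal{S}^{\pi}(\tau)) \] and \[ \sum_{\tau=1}^{t-1} R(\mathcal{S}^{\pi^*}(\tau)) = \sum_{\tau=1}^{t} R(\mathcal{U}^{\pi^*}(\tau)) \quad\text{for all time slots } t . \]
   Context: Fix integers $K\ge 2$ and $S,U$ with $1\le S<K$, $1\le U<K$, and $S=U$. There are $K$ processes indexed by $k\in\{1,\dots,K\}$ (sensor $k$ feeds destination $k$ through a single relay), and time slots $t=1,2,\dots$. The state at time $t$ consists of the relay AoI values $g_k(t)$ and the destination AoI values $h_k(t)$, with initial values $g_k(1)=h_k(1)=1$ for all $k$. A policy $\pi$ is a map assigning to the current state $(\{g_k(t)\}_k,\{h_k(t)\}_k)$ a pair $(\mathcal{S}^{\pi}(t),\mathcal{U}^{\pi}(t))$ of subsets of $\{1,\dots,K\}$ with $|\mathcal{S}^{\pi}(t)|=S$ (sensors sampled) and $|\mathcal{U}^{\pi}(t)|=U$ (destinations updated). Errorless dynamics: $g_k(t+1)=1$ if $k\in\mathcal{S}(t)$ and $g_k(t+1)=g_k(t)+1$ otherwise; $h_k(t+1)=g_k(t)+1$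 if $k\in\mathcal{U}(t)$ and $h_k(t+1)=h_k(t)+1$ otherwise. Write $g_k^\pi(t),h_k^\pi(t)$ for the resulting sequences under $\pi$. Define the reductions $R(\mathcal{S}^{\pi}(\tau))=\sum_{k\in\mathcal{S}^{\pi}(\tau)} g_k^{\pi}(\tau)$ and $R(\mathcal{U}^{\pi}(\tau))=\sum_{k\in\mathcal{U}^{\pi}(\tau)}\big(h_k^{\pi}(\tau)-g_k^{\pi}(\tau)\big)$; empty sums are $0$. *)

(* Defs.v *)
From mathcomp Require Import all_boot all_order all_algebra.
Set Implicit Arguments. Unset Strict Implicit. Unset Printing Implicit Defensive.
Import Order.TTheory GRing.Theory Num.Theory.

(* Processes k = 1..K are represented by 'I_K (i.e. 0..K-1). *)
(* A state is the pair (relay AoI g, destination AoI h). *)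
Definition state (K : nat) := (('I_K -> nat) * ('I_K -> nat))%type.

Record policy (K S U : nat) := Policy {
  pol :> state K -> {set 'I_K} * {set 'I_K};
  pol_cardS : forall x, #|(pol x).1| = S;
  pol_cardU : forall x, #|(pol x).2| = U
}.

Section Dyn.
Variables (K S U : nat) (pi : policy K S U).

Definition step (x : state K) : state K :=
  let d := pi x in
  (fun k => if k \in d.1 then 1 else x.1 k + 1,
   fun k => if k \in d.2 then x.1 k + 1 else x.2 k + 1)%N.

(* traj n = state at time slot n+1; initial g_k(1) = h_k(1) = 1 *)
Fixpoint traj (n : nat) : state K :=
  match n with
  | 0 => (fun _ => 1%N, fun _ => 1%N)
  | n'.+1 => step (traj n')
  end.

Definition gA (t : nat) (k : 'I_K) : nat := (traj t.-1).1 k.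
Definition hA (t : nat) (k : 'I_K) : nat := (traj t.-1).2 k.
Definition Sset (t : nat) : {set 'I_K} := (pi (traj t.-1)).1.
Definition Uset (t : nat) : {set 'I_K} := (pi (traj t.-1)).2.

Definition RS (tau : nat) : int := (\sum_(k in Sset tau) (gA tau k)%:Z)%R.
Definition RU (tau : nat) : int :=
  (\sum_(k in Uset tau) ((hA tau k)%:Z - (gA tau k)%:Z))%R.

Definition avg_aoi (T : nat) : rat :=
  ((\sum_(1 <= t < T.+1) \sum_(k < K) hA t k)%:R / (T * K)%:R)%R.

Definition Jsample (T : nat) : int :=
  (\sum_(1 <= t < T.+1) \sum_(1 <= tau < t.-1) RS tau)%R.
End Dyn.

(* Main.v *)
Require Import Defs.
From mathcomp Require Import all_boot all_order all_algebra zify.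
Import Order.TTheory GRing.Theory Num.Theory.
Set Implicit Arguments. Unset Strict Implicit. Unset Printing Implicit Defensive.

Section Greedy.
Variables (K S : nat) (hSK : (S <= K)%N).

Definition grel (g : 'I_K -> nat) : rel 'I_K := fun a b => (g b <= g a)%N.
Definition gsort (g : 'I_K -> nat) := sort (grel g) (enum 'I_K).
Definition Agr (g : 'I_K -> nat) : {set 'I_K} := [set x in take S (gsort g)].

Lemma card_Agr g : #|Agr g| = S.
Proof.
rewrite cardsE; have /card_uniqP -> : uniq (take S (gsort g)).
  by apply: take_uniq; rewrite sort_uniq enum_uniq.
by rewrite size_take size_sort size_enum_ord; case: ltnP => // h; lia.
Qed.

Lemma Agr_max g a b : a \in Agr g -> b \notin Agr g -> (g b <= g a)%N.
Proof.
rewrite !inE => ha hb.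
have hs : sorted (grel g) (gsort g).
  by apply: sort_sorted => x y; rewrite /grel; apply: leq_total.
have hb' : b \in drop S (gsort g).
  have : b \in gsort g by rewrite mem_sort mem_enum.
  by rewrite -{1}(cat_take_drop S (gsort g)) mem_cat (negbTE hb).
move: hs; rewrite -(cat_take_drop S (gsort g)) sorted_pairwise; last first.
  by move=> x y z; rewrite /grel => h1 h2; apply: leq_trans h2 h1.
by rewrite pairwise_cat => /and3P [/allrelP H _ _]; apply: H.
Qed.

Definition gfun (x : state K) : {set 'I_K} * {set 'I_K} :=
  (Agr x.1, if #|[set k | x.1 k == 1%N]| == S then [set k | x.1 k == 1%N] else Agr x.1).

Lemma gfun1 x : #|(gfun x).1| = S. Proof. exact: card_Agr. Qed.
Lemma gfun2 x : #|(gfun x).2| = S.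
Proof. rewrite /gfun /=; case: eqP => // _; exact: card_Agr. Qed.

Definition gpol : policy K S S := Policy gfun1 gfun2.
End Greedy.

Section Gen.
Variables (K S U : nat) (pi : policy K S U).

Notation tr := (traj pi).
Definition Gn n := (\sum_(k < K) (tr n).1 k)%N.
Definition Hn n := (\sum_(k < K) (tr n).2 k)%N.
Definition an n := (\sum_(k in (pi (tr n)).1) (tr n).1 k)%N.
Definition bn n := (\sum_(k in (pi (tr n)).2) ((tr n).2 k - (tr n).1 k))%N.
Definition An m := (\sum_(n < m) an n)%N.
Definition Bn m := (\sum_(n < m) bn n)%N.

Lemma trS n : tr n.+1 = step pi (tr n). Proof. by []. Qed.

Lemma inv_basic n k : [/\ 1 <= (tr n).1 k, (tr n).1 k <= n.+1 & (tr n).1 k <= (tr n).2 k]%N.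
Proof.
elim: n k => [|n IH] k /=; first by [].
rewrite /step /=; case: (IH k) => h1 h2 h3.
by case: ifP => _; case: ifP => _; split => //; lia.
Qed.

Lemma sumK : (\sum_(k < K) 1 = K)%N.
Proof. by rewrite sum1_card card_ord. Qed.

Lemma Grec n : (Gn n.+1 + an n = Gn n + K)%N.
Proof.
rewrite /Gn /an trS /step /= [X in (_ + X)%N]big_mkcond /= -big_split /=.
have -> : (\sum_(k<K) (tr n).1 k + K = \sum_(k<K) ((tr n).1 k + 1))%N by rewrite big_split /= sumK.
by apply: eq_bigr => k _; case: ifP => _; rewrite ?addn0 // add1n addn1.
Qed.

Lemma Hrec n : (Hn n.+1 + bn n = Hn n + K)%N.
Proof.
rewrite /Hn /bn trS /step /= [X in (_ + X)%N]big_mkcond /= -big_split /=.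
have -> : (\sum_(k<K) (tr n).2 k + K = \sum_(k<K) ((tr n).2 k + 1))%N by rewrite big_split /= sumK.
apply: eq_bigr => k _; case: (inv_basic n k) => _ _ h; case: ifP => _; lia.
Qed.

Lemma bGH n : (bn n + Gn n <= Hn n)%N.
Proof.
rewrite /Hn /bn /Gn [X in (X + _)%N]big_mkcond /= -big_split /=; apply: leq_sum => k _.
case: (inv_basic n k) => _ _ h; case: ifP => _; lia.
Qed.

Lemma GA m : (Gn m + An m = m.+1 * K)%N.
Proof.
elim: m => [|m IH]; first by rewrite /An big_ord0 addn0 mul1n /Gn sumK.
rewrite /An big_ord_recr /= -/(An m); have := Grec m; lia.
Qed.

Lemma HB m : (Hn m + Bn m = m.+1 * K)%N.
Proof.
elim: m => [|m IH]; first by rewrite /Bn big_ord0 addn0 mul1n /Hn sumK.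
rewrite /Bn big_ord_recr /= -/(Bn m); have := Hrec m; lia.
Qed.

Lemma BA m : (Bn m <= An m.-1)%N.
Proof.
case: m => [|m] /=; first by rewrite /Bn big_ord0.
rewrite /Bn big_ord_recr /= -/(Bn m).
have := bGH m; have := GA m; have := HB m; lia.
Qed.

Definition cnt (x : state K) j := #|[set k | x.1 k <= j]|.

Lemma cnt0 n : cnt (tr n) 0 = 0%N.
Proof.
apply/eqP; rewrite cards_eq0; apply/eqP/setP => k; rewrite !inE.
by case: (inv_basic n k) => h _ _; rewrite leqn0; apply/negbTE; lia.
Qed.

Lemma cnt_step n j : (cnt (tr n.+1) j.+1 <= minn (cnt (tr n) j + S) K)%N.
Proof.
rewrite leq_min; apply/andP; split; last first.
  by rewrite -{2}(card_ord K) max_card.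
rewrite /cnt trS /step /=.
apply: (@leq_trans (#|(pi (tr n)).1| + #|[set k | (tr n).1 k <= j]|)); last by rewrite pol_cardS addnC.
apply: leq_trans (leq_card_setU _ _).
apply: subset_leq_card; apply/subsetP => k; rewrite !inE.
by case: ifP => // _; rewrite addn1 ltnS => ->; rewrite orbT.
Qed.

Lemma sum_lt m N : (m <= N -> \sum_(j < N) (j < m) = m)%N.
Proof.
move=> hm; rewrite -(big_mkord xpredT (fun j => (j < m)%N : nat)) (big_cat_nat (leq0n m) hm) /=.
rewrite [X in (_ + X)%N]big1_seq ?addn0; last first.
  by move=> i /andP [_]; rewrite mem_index_iota => /andP [h _]; rewrite ltnNge h.
rewrite (eq_big_nat _ _ (F2 := fun _ => 1%N)); last by move=> i /andP [_ ->].
by rewrite sum_nat_const_nat subn0 muln1.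
Qed.

Lemma layer n : (Gn n = \sum_(j < n.+1) (K - cnt (tr n) j))%N.
Proof.
rewrite /Gn.
transitivity (\sum_(k < K) \sum_(j < n.+1) ((j < (tr n).1 k)%N : nat)).
  by apply: eq_bigr => k _; rewrite sum_lt //; case: (inv_basic n k).
rewrite exchange_big /=; apply: eq_bigr => j _.
have hC := cardsC [set k | (tr n).1 k <= j]; rewrite card_ord in hC.
rewrite /cnt -[X in (X - _)%N]hC addKn.
rewrite -sum1_card [RHS]big_mkcond /=; apply: eq_bigr => k _; rewrite !inE -ltnNge.
by case: ifP.
Qed.
End Gen.
Section G2.
Variables (K S : nat) (hSK : (S <= K)%N).
Notation gp := (gpol hSK).

Lemma cnt_greedy n j : (minn (cnt (traj gp n) j + S) K <= cnt (traj gp n.+1) j.+1)%N.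
Proof.
rewrite /cnt trS /step /=.
set g := (traj gp n).1.
have hA : #|Agr S g| = S by apply: card_Agr.
case: (boolP [exists b, (b \notin Agr S g) && (j < g b)%N]).
  move=> /existsP [b /andP [hb hjb]].
  have hsub : Agr S g :|: [set k | g k <= j] \subset
     [set k | (if k \in Agr S g then 1 else g k + 1) <= j.+1].
    apply/subsetP => k; rewrite !inE; case: ifP => // _ /= h; lia.
  apply: leq_trans (geq_minl _ _) _; apply: leq_trans (subset_leq_card hsub).
  rewrite cardsU hA.
  have -> : Agr S g :&: [set k | g k <= j] = set0.
    apply/setP => k; rewrite in_setI in_set0; apply/negbTE/negP => /andP [hk]; rewrite inE => hkj.
    have := Agr_max hk hb; lia.
  by rewrite cards0 subn0 addnC.
rewrite negb_exists => /forallP H.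
apply: leq_trans (geq_minr _ _) _.
have -> : [set k | (if k \in Agr S g then 1 else g k + 1) <= j.+1] = setT.
  apply/setP => k; rewrite !inE; case: ifP => // hk.
  by have := H k; rewrite !inE hk /= -leqNgt addn1 ltnS.
by rewrite cardsT card_ord.
Qed.

Lemma cnt_cmp (pi : policy K S S) n j : (cnt (traj pi n) j <= cnt (traj gp n) j)%N.
Proof.
elim: n j => [|n IH] [|j] //; first by rewrite cnt0.
apply: leq_trans (cnt_step pi n j) _; apply: leq_trans (cnt_greedy n j).
by have := IH j; lia.
Qed.

Lemma G_cmp (pi : policy K S S) n : (Gn gp n <= Gn pi n)%N.
Proof.
rewrite !layer; apply: leq_sum => j _; apply: leq_sub2l; exact: cnt_cmp.
Qed.

Lemma A_cmp (pi : policy K S S) m : (An pi m <= An gp m)%N.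
Proof. have := GA pi m; have := GA gp m; have := G_cmp pi m; lia. Qed.

Definition ginv (x : state K) :=
  (forall k, x.1 k != 1%N -> x.2 k = x.1 k) /\
  (#|[set k | x.1 k == 1%N]| != S -> forall k, x.2 k = x.1 k).

Lemma ginv_notU x k : ginv x -> k \notin (gp x).2 -> x.2 k = x.1 k.
Proof.
move=> [h1 h2]; rewrite /= /gfun /=; case: eqP => [_|/eqP hne _]; last exact: h2.
by rewrite inE => /h1.
Qed.

Lemma ginv_tr n : ginv (traj gp n).
Proof.
elim: n => [|n IH]; first by split.
rewrite trS; set x := traj gp n.
have hc : #|[set k | (step gp x).1 k == 1%N]| = S.
  rewrite -[RHS](card_Agr hSK x.1); apply: eq_card => k; rewrite !inE /step /=.
  case: ifP => h; rewrite inE in h; first by rewrite h.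
  by rewrite h; case: (inv_basic gp n k); rewrite -/x => h1 _ _; apply/negbTE/eqP; lia.
split; last by rewrite hc eqxx.
move=> k; rewrite /step /=; case: ifP => // hA _.
case: ifP => // hU; rewrite (ginv_notU IH) ?hU //.
Qed.

Lemma bG_eq n : (bn gp n + Gn gp n = Hn gp n)%N.
Proof.
rewrite /Hn /bn /Gn [X in (X + _)%N]big_mkcond /= -big_split /=; apply: eq_bigr => k _.
case: (inv_basic gp n k) => _ _ h; case: ifP => hk; first lia.
by rewrite (ginv_notU (ginv_tr n)) ?hk.
Qed.

Lemma BA_eq m : (Bn gp m = An gp m.-1)%N.
Proof.
case: m => [|m] /=; first by rewrite /Bn /An !big_ord0.
rewrite /Bn big_ord_recr /= -/(Bn gp m).
have := bG_eq m; have := GA gp m; have := HB gp m; lia.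
Qed.
End G2.
Lemma sum_eq_terms_nat (f g : nat -> nat) T :
  (forall i, (i < T)%N -> (f i <= g i)%N) ->
  (\sum_(0 <= i < T) g i <= \sum_(0 <= i < T) f i)%N -> forall i, (i < T)%N -> f i = g i.
Proof.
elim: T => [|T IH] hfg hs i hi //.
move: hs; rewrite !big_nat_recr //= => hs.
have h1 : (\sum_(0 <= i < T) f i <= \sum_(0 <= i < T) g i)%N.
  by rewrite big_nat_cond [X in (_ <= X)%N]big_nat_cond; apply: leq_sum => j /andP [/andP [_ hj] _]; apply: hfg; lia.
have h2 := hfg T (ltnSn T).
have e1 : f T = g T by lia.
have e2 : (\sum_(0 <= i < T) g i <= \sum_(0 <= i < T) f i)%N by lia.
case: (ltngtP i T) => [hiT|hiT|->] //; last by lia.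
by apply: IH => // j hj; apply: hfg; lia.
Qed.

Lemma sum_eq_terms (f g : nat -> nat) T :
  (forall i, (i < T)%N -> (f i <= g i)%N) ->
  (\sum_(i < T) g i <= \sum_(i < T) f i)%N -> forall i, (i < T)%N -> f i = g i.
Proof.
by rewrite -!(big_mkord xpredT); apply: sum_eq_terms_nat.
Qed.

Section Conv.
Variables (K S U : nat) (pi : policy K S U).

Lemma RS_an n : RS pi n.+1 = Posz (an pi n).
Proof. by rewrite /RS /an -natz natr_sum; apply: eq_bigr => k _; rewrite natz. Qed.

Lemma RU_bn n : RU pi n.+1 = Posz (bn pi n).
Proof.
rewrite /RU /bn -natz natr_sum; apply: eq_bigr => k _; rewrite natz /hA /gA /=.
by rewrite subzn //; case: (inv_basic pi n k).
Qed.

Lemma sumRS t : (\sum_(1 <= tau < t) RS pi tau)%R = Posz (An pi t.-1).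
Proof.
rewrite big_add1 big_mkord /An -natz natr_sum; apply: eq_bigr => n _.
by rewrite RS_an natz.
Qed.

Lemma sumRU t : (\sum_(1 <= tau < t) RU pi tau)%R = Posz (Bn pi t.-1).
Proof.
rewrite big_add1 big_mkord /Bn -natz natr_sum; apply: eq_bigr => n _.
by rewrite RU_bn natz.
Qed.

Definition SH T := (\sum_(t < T) Hn pi t)%N.

Lemma avgE T : avg_aoi pi T = ((SH T)%:R / (T * K)%:R)%R.
Proof.
by rewrite /avg_aoi /SH big_add1 big_mkord /=.
Qed.

Lemma JE T : Jsample pi T = Posz (\sum_(t < T) An pi t.-1).
Proof.
rewrite /Jsample big_add1 big_mkord /= -natz natr_sum; apply: eq_bigr => t _.
by rewrite sumRS natz.
Qed.

Lemma SHE T : (SH T + \sum_(t < T) Bn pi t = \sum_(t < T) t.+1 * K)%N.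
Proof. by rewrite /SH -big_split; apply: eq_bigr => t _; exact: HB. Qed.
End Conv.

Theorem theorem1 (K S U T : nat)
  (hK : (2 <= K)%N) (hS1 : (1 <= S)%N) (hSK : (S < K)%N)
  (hU1 : (1 <= U)%N) (hUK : (U < K)%N) (hSU : S = U) (hT : (1 <= T)%N)
  (pistar : policy K S U) :
  (forall pi : policy K S U, (avg_aoi pistar T <= avg_aoi pi T)%R) <->
  ((forall pi : policy K S U, (Jsample pi T <= Jsample pistar T)%R) /\
   (forall t : nat, (1 <= t <= T.-1)%N ->
      (\sum_(1 <= tau < t) RS pistar tau)%R = (\sum_(1 <= tau < t.+1) RU pistar tau)%R)).
Proof.
subst U.
have hSK' : (S <= K)%N by apply: ltnW.
set gp := gpol hSK'.
have avg_le : forall p q : policy K S S,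
    (avg_aoi p T <= avg_aoi q T)%R = (SH p T <= SH q T)%N.
  move=> p q; rewrite !avgE ler_pM2r ?ler_nat // invr_gt0 ltr0n muln_gt0.
  by apply/andP; split; lia.
have condE : forall t, (\sum_(1 <= tau < t) RS pistar tau)%R = (\sum_(1 <= tau < t.+1) RU pistar tau)%R
    <-> An pistar t.-1 = Bn pistar t.
  by move=> t; rewrite sumRS sumRU /=; split => [[]|->].
have hBg : (\sum_(t < T) Bn gp t = \sum_(t < T) An gp t.-1)%N.
  by apply: eq_bigr => t _; apply: BA_eq.
have hBA : forall pi : policy K S S, (\sum_(t < T) Bn pi t <= \sum_(t < T) An pi t.-1)%N.
  by move=> pi; apply: leq_sum => t _; apply: BA.
have hJ : forall pi : policy K S S, (\sum_(t < T) An pi t.-1 <= \sum_(t < T) An gp t.-1)%N.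
  by move=> pi; apply: leq_sum => t _; apply: A_cmp.
split.
  move=> H; have h1 := H gp; rewrite avg_le in h1.
  have e1 := SHE pistar T; have e2 := SHE gp T.
  have key : (\sum_(t < T) An gp t.-1 <= \sum_(t < T) Bn pistar t)%N by lia.
  split.
    move=> pi; rewrite !JE lez_nat.
    have := hJ pi; have := hBA pistar; lia.
  move=> t /andP [ht1 ht2]; apply/condE; symmetry.
  apply: (@sum_eq_terms (fun t => Bn pistar t) (fun t => An pistar t.-1) T).
  - by move=> i _; apply: BA.
  - have := hJ pistar; lia.
  - lia.
move=> [HJ Hc] pi; rewrite avg_le.
have hB : (\sum_(t < T) Bn pistar t = \sum_(t < T) An pistar t.-1)%N.
  apply: eq_bigr => [[[|t] ht]] _ /=; first by rewrite /Bn /An !big_ord0.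
  symmetry; apply: (proj1 (condE t.+1)); apply: Hc; apply/andP; split => //; lia.
have := HJ pi; rewrite !JE lez_nat => hpi.
have e1 := SHE pistar T; have e2 := SHE pi T; have := hBA pi; lia.
Qed.
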